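(* Let $\gamma=(\mathcal E,\mathcal F,\pi)$ be an EBA context whose failure model satisfies $\mathcal F\subseteq SO(t)$. Then every action protocol $P$ that implements the knowledge-based program $\mathbf P^0$ in $\gamma$ is an EBA decision protocol for $\gamma$. Moreover, in every run of $\mathcal I_{\gamma,P}$ every nonfaulty agent decides by round $t+2$ (i.e. after at most $t+1$ rounds of message exchange), and Validity holds even for faulty agents: if any agent (faulty or not) decides $v$, then $\mathit{init}_j=v$ for some agent $j$.
   Context: Agents and runs. There are $n$ agents $\mathit{Agt}=\{1,\ldots,n\}$; time is $m\in\mathbb N$, and round $m+1$ is the step from time $m$ to time $m+1$. An information-exchange protocol $\mathcal E$ specifies for each agent $i$: a set $L_i$ of local states, a set $I_i\subseteq L_i$ of initial states, a set $A_i$ of actions, a set $M_i$ of messages, a function giving for $s\in L_i$, $a\in A_i$ and each agent $j$ the message $\mu_{ij}(s,a)\in M_i\cup\{\bot\}$ that $i$ sends to $j$ ($\bot$ means no message), and a transition function $\delta_i:L_i\times A_i\times\prod_j(M_j\cup\{\bot\})\to L_i$. A failure pattern is a pair $(\mathcal N,F)$ with $\mathcal N\subseteq\mathit{Agt}$ (the nonfaulty agents) and $F:\mathbb N\times\mathit{Agt}\times\mathit{Agt}\to\{0,1\}$, where $F(m,i,j)=0$ means the message from $i$ to $j$ in round $m+1$ is lost. The sending-omissions failure model $SO(t)$ ($t<n$) is the set of failure patterns with $|\mathit{Agt}\setminus\mathcal N|\le t$ such that $F(m,i,j)=0$ implies $i\notin\mathcal N$. An action protocol $P$ gives each agent $i$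 a map $P_i:L_i\to A_i$. Given $\mathcal E$, a failure model $\mathcal F$ and $P$, each initial global state (a failure pattern $(\mathcal N,F)\in\mathcal F$ and an $s_i\in I_i$ for each $i$) determines a unique run $r$: if $r_i(k)$ is $i$'s local state at time $k$, then $i$ performs $a_i=P_i(r_i(k))$, agent $j$ receives $m'_{ij}=\mu_{ij}(r_i(k),a_i)$ if $F(k,i,j)=1$ and $\bot$ otherwise, and $r_i(k+1)=\delta_i(r_i(k),a_i,(m'_{1i},\ldots,m'_{ni}))$; the failure pattern is fixed in the run and $\mathcal N(r)$ denotes its nonfaulty set. $\mathcal R_{\mathcal E,\mathcal F,P}$ is the set of all such runs. Agent $i$ decides $v$ in round $k$ of $r$ if $P_i(r_i(k-1))=\mathtt{decide}_i(v)$. An interpreted system $\mathcal I=(\mathcal R,\pi)$ is a set of runs with an interpretation $\pi$ of primitive propositions at points $(r,m)$. $\mathcal I,(r,m)\models K_i\varphi$ iff $\varphi$ holds at all points $(r',m')$ of $\mathcal I$ with $r'_i(m')=r_i(m)$; $\bigcirc\varphi$ holds at $(r,m)$ iff $\varphi$ holds at $(r,m+1)$; $\ominus\varphi$ holds at $(r,m)$ iff $m>0$ and $\varphi$ holds at $(r,m-1)$; $\mathcal I\models\varphi$ means $\varphi$ holds at all points. EBA contexts. An EBA context is a tuple $\gamma=(\mathcal E,\mathcal F,\pi)$ such that: each $A_i=\{\mathtt{decide}_i(0),\mathtt{decide}_i(1),\mathtt{noop}\}$; local states have the form $\langle \mathit{time}_i,\mathit{init}_i,\mathit{decided}_i,\mathit{rd}_i,\ldots\rangle$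 with $\mathit{time}_i\in\mathbb N$, $\mathit{init}_i\in\{0,1\}$ (initial preference), $\mathit{decided}_i,\mathit{rd}_i\in\{0,1,\bot\}$; initial states have the form $\langle 0,\mathit{init}_i,\bot,\bot,\ldots\rangle$; there are pairwise disjoint sets $M^0,M^1,M^2$ with $\bot\notin M^0\cup M^1$ such that an agent performing $\mathtt{decide}_i(0)$ (resp. $\mathtt{decide}_i(1)$, resp. $\mathtt{noop}$) sends every agent a message in $M^0$ (resp. $M^1$, resp. $M^2$); $\delta_i$ increments $\mathit{time}_i$, sets $\mathit{decided}_i:=v$ if the action is $\mathtt{decide}_i(v)$ (otherwise leaves it unchanged), and sets $\mathit{rd}_i$ to $0$ (resp. $1$) if in that round $i$ received a message from an agent performing $\mathtt{decide}(0)$ (resp. $\mathtt{decide}(1)$), and to $\bot$ otherwise; $\pi$ interprets $\mathit{init}_i=v$, $\mathit{decided}_i=v$, $\mathit{time}_i=k$ by reading $i$'s local state, and $i\in\mathcal N$ as true at $(r,m)$ iff $i\in\mathcal N(r)$. Abbreviations: $\mathit{jdecided}_i=v$ is $\mathit{decided}_i=v\wedge\ominus(\mathit{decided}_i=\bot)$; $\mathit{deciding}_i=v$ is $\mathit{decided}_i=\bot\wedge\bigcirc(\mathit{decided}_i=v)$; $\exists v$ is $\bigvee_j \mathit{init}_j=v$. For an action protocol $P$, $\mathcal I_{\gamma,P}=(\mathcal R_{\mathcal E,\mathcal F,P},\pi)$. $P$ is an EBA decision protocol for $\gamma$ if in every run of $\mathcal I_{\gamma,P}$: (Unique Decision) no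 agent decides $v$ and later decides $1-v$; (Agreement) no two nonfaulty agents decide different values; (Validity) if a nonfaulty agent decides $v$ then $\mathit{init}_j=v$ for some $j$; (Termination) every nonfaulty agent eventually decides. Knowledge-based programs. A knowledge-based program $\mathbf P=(\mathbf P_1,\ldots,\mathbf P_n)$ has each $\mathbf P_i$ generated by $\mathbf P_i::=a\mid\text{if }\varphi\text{ then }\mathbf P_i\text{ else }\mathbf P_i$ with $a\in A_i$ and each test $\varphi$ a Boolean combination of formulas $K_i\psi$ and propositions determined by $i$'s local state; its truth at a point depends only on $i$'s local state. Given $\mathcal I$ and a local state $s$ of $i$, $\mathbf P_i^{\mathcal I}(s)$ is the action obtained by evaluating the tests at $s$ in $\mathcal I$. An action protocol $P$ implements $\mathbf P$ in $\gamma$ if $P_i(s)=\mathbf P_i^{\mathcal I}(s)$ for every $i$ and every local state $s$ of $i$ arising in $\mathcal I=\mathcal I_{\gamma,P}$. The program $\mathbf P^0$: for each agent $i$, $\mathbf P^0_i$ is: if $\mathit{decided}_i\neq\bot$ then $\mathtt{noop}$; else if $\mathit{init}_i=0\vee K_i(\bigvee_{j\in\mathit{Agt}}\mathit{jdecided}_j=0)$ then $\mathtt{decide}_i(0)$; else if $K_i(\bigwedge_{j\in\mathit{Agt}}\neg(\mathit{deciding}_j=0))$ then $\mathtt{decide}_i(1)$; else $\mathtt{noop}$. *)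

(* Defs.v *)
From mathcomp Require Import all_boot.
Set Implicit Arguments. Unset Strict Implicit. Unset Printing Implicit Defensive.

(* Values 0 and 1 are encoded as [false] and [true]. Agents are ['I_n]. *)

Inductive act := Decide of bool | Noop.

(* Failure patterns (N, F): F m i j = false means the message from i to j in
   round m+1 (from time m to time m+1) is lost. *)
Record fpattern (n : nat) := FPattern {
  nonfaulty : {set 'I_n};
  fdeliver : nat -> 'I_n -> 'I_n -> bool }.

Definition SO (n t : nat) (fp : fpattern n) : Prop :=
  #|~: nonfaulty fp| <= t /\
  forall m i j, fdeliver fp m i j = false -> i \notin nonfaulty fp.

(* Data of a context (E, F, pi): information-exchange protocol E with the
   EBA fields of local states exposed as projections, the message classes
   M^0, M^1, M^2, and the failure model F. *)
Record context (n : nat) := Context {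
  Lst : 'I_n -> Type;
  Ist : forall i, Lst i -> Prop;
  Msg : 'I_n -> Type;
  mu : forall i, Lst i -> act -> 'I_n -> option (Msg i);  (* mu_ij(s,a), None = bot *)
  delta : forall i, Lst i -> act -> (forall j, option (Msg j)) -> Lst i;
  time : forall i, Lst i -> nat;
  init : forall i, Lst i -> bool;
  decided : forall i, Lst i -> option bool;   (* None = bot *)
  rd : forall i, Lst i -> option bool;
  M0 : forall i, Msg i -> Prop;
  M1 : forall i, Msg i -> Prop;
  M2 : forall i, option (Msg i) -> Prop;      (* M^2 may contain bot *)
  FM : fpattern n -> Prop }.

Section Ctx.
Variables (n : nat) (g : context n).

Definition recv0 (msgs : forall j, option (Msg g j)) : Prop :=
  exists j m, msgs j = Some m /\ M0 m.
Definition recv1 (msgs : forall j, option (Msg g j)) : Prop :=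
  exists j m, msgs j = Some m /\ M1 m.

Definition EBA_context : Prop :=
  (forall i (s : Lst g i), Ist s -> time s = 0 /\ decided s = None /\ rd s = None) /\
  (* M^0, M^1, M^2 pairwise disjoint (bot is not in M^0, M^1 by typing) *)
  (forall i (m : Msg g i), M0 m -> M1 m -> False) /\
  (forall i (m : Msg g i), M0 m -> M2 (Some m) -> False) /\
  (forall i (m : Msg g i), M1 m -> M2 (Some m) -> False) /\
  (forall i (s : Lst g i) j, exists m, mu s (Decide false) j = Some m /\ M0 m) /\
  (forall i (s : Lst g i) j, exists m, mu s (Decide true) j = Some m /\ M1 m) /\
  (forall i (s : Lst g i) j, M2 (mu s Noop j)) /\
  (forall i (s : Lst g i) a msgs, time (delta s a msgs) = (time s).+1) /\
  (forall i (s : Lst g i) a msgs, init (delta s a msgs) = init s) /\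
  (forall i (s : Lst g i) v msgs, decided (delta s (Decide v) msgs) = Some v) /\
  (forall i (s : Lst g i) msgs, decided (delta s Noop msgs) = decided s) /\
  (forall i (s : Lst g i) a msgs, recv0 msgs -> ~ recv1 msgs ->
       rd (delta s a msgs) = Some false) /\
  (forall i (s : Lst g i) a msgs, recv1 msgs -> ~ recv0 msgs ->
       rd (delta s a msgs) = Some true) /\
  (forall i (s : Lst g i) a msgs, ~ recv0 msgs -> ~ recv1 msgs ->
       rd (delta s a msgs) = None).

Definition protocol := forall i, Lst g i -> act.

(* A run is determined by an initial global state: a failure pattern and an
   initial local state for each agent. *)
Record run := Run { rfp : fpattern n; rinit : forall i, Lst g i }.

Section Runs.
Variable P : protocol.

Definition inR (r : run) : Prop := FM g (rfp r) /\ forall i, Ist (rinit r i).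

Fixpoint gstate (fp : fpattern n) (s0 : forall i, Lst g i) (m : nat)
  : forall i, Lst g i :=
  match m with
  | 0 => s0
  | k.+1 => let s := gstate fp s0 k in
      fun i => delta (s i) (P (s i))
        (fun j => if fdeliver fp k j i then mu (s j) (P (s j)) i else None)
  end.

Definition lstate (r : run) (m : nat) (i : 'I_n) : Lst g i :=
  gstate (rfp r) (rinit r) m i.

Definition Knows (i : 'I_n) (s : Lst g i) (phi : run -> nat -> Prop) : Prop :=
  forall r' m', inR r' -> lstate r' m' i = s -> phi r' m'.

Definition jdecided (j : 'I_n) (v : bool) (r : run) (m : nat) : Prop :=
  decided (lstate r m j) = Some v /\ 0 < m /\ decided (lstate r m.-1 j) = None.
Definition deciding (j : 'I_n) (v : bool) (r : run) (m : nat) : Prop :=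
  decided (lstate r m j) = None /\ decided (lstate r m.+1 j) = Some v.

(* The action prescribed by the knowledge-based program P^0 at local state s
   of agent i (tests evaluated in I_{gamma,P}); the four clauses are the
   branches of the nested if-then-else. *)
Definition P0_prescribes (i : 'I_n) (s : Lst g i) (a : act) : Prop :=
  let T1 := init s = false \/
            Knows s (fun r m => exists j, jdecided j false r m) in
  let T2 := Knows s (fun r m => forall j, ~ deciding j false r m) in
  (decided s <> None -> a = Noop) /\
  (decided s = None -> T1 -> a = Decide false) /\
  (decided s = None -> ~ T1 -> T2 -> a = Decide true) /\
  (decided s = None -> ~ T1 -> ~ T2 -> a = Noop).

Definition implements_P0 : Prop :=
  forall r m i, inR r -> P0_prescribes (lstate r m i) (P (lstate r m i)).

Definition decides (r : run) (i : 'I_n) (v : bool) (k : nat) : Prop :=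
  exists k', k = k'.+1 /\ P (lstate r k' i) = Decide v.

Definition EBA_decision_protocol : Prop :=
  forall r, inR r ->
  (forall i v k k', decides r i v k -> decides r i (~~ v) k' -> ~ (k < k')) /\
  (forall i j v w k k', i \in nonfaulty (rfp r) -> j \in nonfaulty (rfp r) ->
     decides r i v k -> decides r j w k' -> v = w) /\
  (forall i v k, i \in nonfaulty (rfp r) -> decides r i v k ->
     exists j, init (lstate r 0 j) = v) /\
  (forall i, i \in nonfaulty (rfp r) -> exists v k, decides r i v k).

End Runs.
End Ctx.

(* Main.v *)
Require Import Defs.
From mathcomp Require Import all_boot.
From Stdlib Require Import Classical.


Lemma lstateS {n} {g : context n} {P : protocol g} {r} {k} {i} :
  lstate P r k.+1 i = delta (lstate P r k i) (P _ (lstate P r k i))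
    (fun j => if fdeliver (rfp r) k j i then mu (lstate P r k j) (P _ (lstate P r k j)) i else None).
Proof. by []. Qed.

Lemma dec_step {n} {g : context n} {P : protocol g} {r} {k} {i} : EBA_context g ->
  decided (lstate P r k.+1 i) =
  match P _ (lstate P r k i) with Decide v => Some v | Noop => decided (lstate P r k i) end.
Proof.
move=> [_ [_ [_ [_ [_ [_ [_ [_ [_ [Hd [Hn _]]]]]]]]]]].
rewrite lstateS; case: (P _ _) => [v|]; [exact: Hd | exact: Hn].
Qed.

Lemma init_const {n} {g : context n} {P : protocol g} {r} {k} {i} : EBA_context g ->
  init (lstate P r k i) = init (lstate P r 0 i).
Proof.
move=> HE; have HE' := HE.
move: HE' => [_ [_ [_ [_ [_ [_ [_ [_ [Hi _]]]]]]]]].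
elim: k => // k IH; by rewrite lstateS Hi.
Qed.

Lemma time_lstate {n} {g : context n} {P : protocol g} {r} {k} {i} : EBA_context g ->
  inR r -> time (lstate P r k i) = k.
Proof.
move=> HE [_ Hr]; have HE' := HE.
move: HE' => [H0 [_ [_ [_ [_ [_ [_ [Ht _]]]]]]]].
elim: k => [|k IH]; first by case: (H0 _ _ (Hr i)).
by rewrite lstateS Ht IH.
Qed.

Lemma dec0 {n} {g : context n} {P : protocol g} {r} {i} : EBA_context g ->
  inR r -> decided (lstate P r 0 i) = None.
Proof. by move=> [H0 _] [_ Hr]; case: (H0 _ _ (Hr i)) => _ []. Qed.

Lemma persist {n} {g : context n} {P : protocol g} {r} {a} {b} {i} : EBA_context g ->
  a <= b -> decided (lstate P r a i) <> None -> decided (lstate P r b i) <> None.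
Proof.
move=> HE; elim: b => [|b IH]; first by rewrite leqn0 => /eqP ->.
rewrite leq_eqVlt => /orP [/eqP -> //| Hab] Hd.
rewrite dec_step //; case: (P _ _) => // ; exact: IH.
Qed.

Lemma act_undec {n} {g : context n} {P : protocol g} {r} {k} {i} {v} :
  implements_P0 P -> inR r ->
  P _ (lstate P r k i) = Decide v -> decided (lstate P r k i) = None.
Proof.
move=> HI Hr Hv; case: (HI r k i Hr) => H1 _.
case E: (decided _) => [w|] //; by rewrite H1 ?E in Hv.
Qed.


Lemma dec_true {n} {g : context n} {P : protocol g} {r} {k} {i} :
  implements_P0 P -> inR r -> P _ (lstate P r k i) = Decide true ->
  ~ (init (lstate P r k i) = false \/
      Knows P (lstate P r k i) (fun r m => exists j, jdecided P j false r m)) /\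
  Knows P (lstate P r k i) (fun r m => forall j, ~ deciding P j false r m).
Proof.
move=> HI Hr Hv; have Hu := act_undec HI Hr Hv.
case: (HI r k i Hr) => _ [H2 [H3 H4]].
have nT1 : ~ (init (lstate P r k i) = false \/
      Knows P (lstate P r k i) (fun r m => exists j, jdecided P j false r m)).
  by move=> T1; rewrite H2 in Hv.
split=> //; case: (classic (Knows P (lstate P r k i) (fun r m => forall j, ~ deciding P j false r m))) => // nT2.
by rewrite H4 in Hv.
Qed.

Lemma dec_false {n} {g : context n} {P : protocol g} {r} {k} {i} :
  implements_P0 P -> inR r -> P _ (lstate P r k i) = Decide false ->
  (init (lstate P r k i) = false \/
      Knows P (lstate P r k i) (fun r m => exists j, jdecided P j false r m)).
Proof.
move=> HI Hr Hv; have Hu := act_undec HI Hr Hv.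
case: (HI r k i Hr) => _ [H2 [H3 H4]].
case: (classic (init (lstate P r k i) = false \/
      Knows P (lstate P r k i) (fun r m => exists j, jdecided P j false r m))) => // nT1.
case: (classic (Knows P (lstate P r k i) (fun r m => forall j, ~ deciding P j false r m))) => nT2.
  by rewrite H3 in Hv.
by rewrite H4 in Hv.
Qed.

Lemma no_simul {n} {g : context n} {P : protocol g} {r} {k} {i} {j} : EBA_context g ->
  implements_P0 P -> inR r ->
  P _ (lstate P r k j) = Decide false -> P _ (lstate P r k i) = Decide true -> False.
Proof.
move=> HE HI Hr Hj Hi.
case: (dec_true HI Hr Hi) => _ T2.
apply: (T2 r k Hr erefl j); split; first exact: (act_undec HI Hr Hj).
by rewrite dec_step // Hj.
Qed.

Lemma know0 {n} {g : context n} {P : protocol g} {r} {k} {i} {j} : EBA_context g ->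
  implements_P0 P -> inR r ->
  P _ (lstate P r k j) = Decide false -> fdeliver (rfp r) k j i = true ->
  Knows P (lstate P r k.+1 i) (fun r m => exists j, jdecided P j false r m).
Proof.
move=> HE HI Hr Hj Hdel; have HE' := HE.
move: HE' => [H0 [D01 [D02 [D12 [Mu0 [Mu1 [Mu2 [Ht [Hi [Hd [Hn [R0 [R1 RN]]]]]]]]]]]]].
have Hrd : rd (lstate P r k.+1 i) = Some false.
  rewrite lstateS; apply: R0.
  - exists j; rewrite Hdel Hj; case: (Mu0 _ (lstate P r k j) i) => m [Hm HM].
    by exists m.
  - move=> [j' [m [Hm HM1]]]; move: Hm; case: ifP => // _.
    case E: (P _ (lstate P r k j')) => [[|]|] Hm.
    + exact: (no_simul HE HI Hr Hj E).
    + case: (Mu0 _ (lstate P r k j') i) => m' [Hm' HM0].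
      rewrite Hm' in Hm; case: Hm => Hmm; subst m'; exact: (D01 _ _ HM0 HM1).
    + have := Mu2 _ (lstate P r k j') i; rewrite Hm => HM2; exact: (D12 _ _ HM1 HM2).
move=> r' [|m'] Hr' Hs.
  case: (Hr') => _ Hr0; case: (H0 _ _ (Hr0 i)) => _ [_ Hrd0].
  by move: Hrd; rewrite -Hs /lstate /= Hrd0.
move: Hrd; rewrite -Hs lstateS.
set msgs := (fun j0 => _).
case: (classic (recv0 msgs)) => [[j' [mm [Hm HM0]]]|nr0] Hrd.
  move: Hm; rewrite /msgs; case: ifP => // _.
  case E: (P _ (lstate P r' m' j')) => [[|]|] Hm.
  + case: (Mu1 _ (lstate P r' m' j') i) => m'' [Hm'' HM1].
    rewrite Hm'' in Hm; case: Hm => Hmm; subst m''; case: (D01 _ _ HM0 HM1).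
  + exists j'; split; first by rewrite dec_step // E.
    split=> //=; exact: (act_undec HI Hr' E).
  + have := Mu2 _ (lstate P r' m' j') i; rewrite Hm => HM2; case: (D02 _ _ HM0 HM2).
case: (classic (recv1 msgs)) => nr1.
  by rewrite R1 in Hrd.
by rewrite RN in Hrd.
Qed.

Lemma chain_step {n} {g : context n} {P : protocol g} {r} {m} {j} : EBA_context g ->
  implements_P0 P -> inR r ->
  P _ (lstate P r m.+1 j) = Decide false -> exists j', P _ (lstate P r m j') = Decide false.
Proof.
move=> HE HI Hr Hj.
case: (dec_false HI Hr Hj) => [Hinit|HK].
  rewrite init_const // in Hinit.
  case: (HI r 0 j Hr) => _ [H2 _].
  have H0 := H2 (dec0 HE Hr) (or_introl Hinit).
  have D1 : decided (lstate P r 1 j) <> None by rewrite dec_step // H0.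
  by have := persist (a := 1) (b := m.+1) HE isT D1; rewrite (act_undec HI Hr Hj).
case: (HK r m.+1 Hr erefl) => j' [Hd [_ Hd']].
exists j'; move: Hd; rewrite dec_step //=.
case: (P _ _) => [v|]; first by case=> ->.
by rewrite Hd'.
Qed.

Lemma chain {n} {g : context n} {P : protocol g} {r} {m} {j} k : EBA_context g ->
  implements_P0 P -> inR r -> k <= m ->
  P _ (lstate P r m j) = Decide false -> exists j', P _ (lstate P r k j') = Decide false.
Proof.
move=> HE HI Hr; elim: m j => [|m IH] j Hk Hj.
  by move: Hk; rewrite leqn0 => /eqP ->; exists j.
move: Hk; rewrite leq_eqVlt => /orP [/eqP ->|Hk]; first by exists j.
case: (chain_step HE HI Hr Hj) => j' Hj'; exact: (IH j' Hk Hj').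
Qed.

Lemma valid0 {n} {g : context n} {P : protocol g} {r} {m} {j} : EBA_context g ->
  implements_P0 P -> inR r ->
  P _ (lstate P r m j) = Decide false -> exists j', init (lstate P r 0 j') = false.
Proof.
move=> HE HI Hr Hj.
case: (chain 0 HE HI Hr (leq0n m) Hj) => j' Hj'.
case: (dec_false HI Hr Hj') => [Hinit|HK]; first by exists j'.
by case: (HK r 0 Hr erefl) => j'' [_ []].
Qed.

Lemma valid1 {n} {g : context n} {P : protocol g} {r} {m} {i} : EBA_context g ->
  implements_P0 P -> inR r ->
  P _ (lstate P r m i) = Decide true -> init (lstate P r 0 i) = true.
Proof.
move=> HE HI Hr Hi; case: (dec_true HI Hr Hi) => nT1 _.
rewrite -(init_const (k := m)) //; case E: (init _) => //.
by case: nT1; left.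
Qed.

Lemma agree01 {n} {t} {g : context n} {P : protocol g} {r} {m} {m'} {i} {j} : EBA_context g ->
  implements_P0 P -> inR r -> SO t (rfp r) -> j \in nonfaulty (rfp r) ->
  P _ (lstate P r m j) = Decide false -> P _ (lstate P r m' i) = Decide true -> False.
Proof.
move=> HE HI Hr [_ HSO] Hnf Hj Hi.
case: (ltngtP m m') => Hmm.
- have Hdel : fdeliver (rfp r) m j i = true.
    case E: (fdeliver _ _ _ _) => //; by have := HSO _ _ _ E; rewrite Hnf.
  have K := know0 HE HI Hr Hj Hdel.
  have Hu' := act_undec HI Hr Hi.
  have Hu : decided (lstate P r m.+1 i) = None.
    case E: (decided _) => [w|] //; have := persist (P:=P) (r:=r) (i:=i) HE Hmm; rewrite E Hu' => /(_ ltac:(done)).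
    by [].
  case: (HI r m.+1 i Hr) => _ [H2 _].
  have Ha := H2 Hu (or_intror K).
  move: Hmm; rewrite leq_eqVlt => /orP [/eqP Em|Hlt].
    by move: Hi; rewrite -Em Ha.
  have D : decided (lstate P r m.+2 i) <> None by rewrite dec_step // Ha.
  by have := persist HE Hlt D; rewrite Hu'.
- case: (chain m' HE HI Hr (ltnW Hmm) Hj) => j' Hj'.
  exact: (no_simul HE HI Hr Hj' Hi).
- subst m'; exact: (no_simul HE HI Hr Hj Hi).
Qed.

Definition isDF (a : act) : bool := if a is Decide false then true else false.

Lemma isDFP a : isDF a -> a = Decide false.
Proof. by case: a => [[]|]. Qed.

Lemma first_dec {n} {g : context n} {P : protocol g} {r} {m} {i} : EBA_context g ->
  inR r -> decided (lstate P r m i) <> None ->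
  exists k v, k < m /\ P _ (lstate P r k i) = Decide v.
Proof.
move=> HE Hr; elim: m => [|m IH]; first by rewrite dec0.
case E: (decided (lstate P r m i)) => [w|] Hd.
  case: IH => [|k [v [Hk Hv]]]; first by rewrite E.
  by exists k, v; split=> //; exact: ltnW.
move: Hd; rewrite dec_step //; case E2: (P _ _) => [v|]; last by rewrite E.
by move=> _; exists m, v.
Qed.

Lemma term {n} {t} {g : context n} {P : protocol g} {r} {i} : t < n -> EBA_context g ->
  implements_P0 P -> (forall fp, FM g fp -> SO t fp) -> inR r ->
  exists v k, k <= t.+2 /\ decides P r i v k.
Proof.
move=> Htn HE HI HFM Hr.
case E: (decided (lstate P r t.+1 i)) => [w|].
  case: (first_dec (P:=P) (i:=i) (m := t.+1) HE Hr) => [|k [v [Hk Hv]]]; first by rewrite E.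
  exists v, k.+1; split; first exact: (leq_trans Hk).
  by exists k.
case: (HI r t.+1 i Hr) => _ [H2 [H3 _]].
set s := lstate P r t.+1 i in E H2 H3.
case: (classic (init s = false \/
      Knows P s (fun r m => exists j, jdecided P j false r m))) => [T1|nT1].
  by exists false, t.+2; split=> //; exists t.+1; split=> //; exact: H2.
exists true, t.+2; split=> //; exists t.+1; split=> //; apply: H3 => //.
move=> r' m' Hr' Hs j' [Hd1 Hd2].
have Em : m' = t.+1.
  by have := time_lstate (P:=P) (r:=r') (k:=m') (i:=i) HE Hr'; rewrite Hs time_lstate.
subst m'.
have Hj' : P _ (lstate P r' t.+1 j') = Decide false.
  move: Hd2; rewrite dec_step //; case: (P _ _) => [v|]; first by case=> ->.
  by rewrite Hd1.
pose f (k : 'I_t.+1) := odflt j' [pick x | isDF (P _ (lstate P r' k x))].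
have Hf : forall k : 'I_t.+1, P _ (lstate P r' k (f k)) = Decide false.
  move=> k; rewrite /f; case: pickP => [x /isDFP //|H].
  have Hk : (k : nat) <= t.+1 by apply: ltnW.
  case: (chain k HE HI Hr' Hk Hj') => x Hx.
  by have := H x; rewrite Hx.
have finj : injective f.
  have key : forall a b : 'I_t.+1, a < b -> f a = f b -> False.
    move=> a b Hab Hfab.
    have D : decided (lstate P r' a.+1 (f a)) <> None by rewrite dec_step // Hf.
    have := persist (P:=P) (r:=r') HE Hab D.
    by rewrite Hfab (act_undec HI Hr' (Hf b)).
  move=> a b Hfab; case: (ltngtP a b) => Hab.
  - by case: (key _ _ Hab Hfab).
  - by case: (key _ _ Hab (esym Hfab)).
  - exact: val_inj.
have [Hcard HSO] := HFM _ (proj1 Hr').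
have [k Hk] : exists k, f k \in nonfaulty (rfp r').
  case: (classic (exists k, f k \in nonfaulty (rfp r'))) => // Hno.
  have Hsub : f @: [set: 'I_t.+1] \subset ~: nonfaulty (rfp r').
    apply/subsetP => x /imsetP [k _ ->]; rewrite in_setC.
    by apply/negP => Hk; apply: Hno; exists k.
  have := subset_leq_card Hsub; rewrite card_imset // cardsT card_ord => H.
  by have := leq_trans H Hcard; rewrite ltnn.
have Hdel : fdeliver (rfp r') k (f k) i = true.
  case E': (fdeliver _ _ _ _) => //; by have := HSO _ _ _ E'; rewrite Hk.
have K := know0 HE HI Hr' (Hf k) Hdel.
have Hkt : k.+1 <= t.+1 := ltn_ord k.
have Hu : decided (lstate P r' k.+1 i) = None.
  case E': (decided _) => [w|] //.
  have := persist (P:=P) (r:=r') (i:=i) HE Hkt; rewrite E' Hs E.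
  by move=> /(_ ltac:(done)).
case: (HI r' k.+1 i Hr') => _ [H2' _].
have Ha := H2' Hu (or_intror K).
move: Hkt; rewrite leq_eqVlt => /orP [/eqP Ek|Hlt].
  by apply: nT1; right; rewrite -Hs -Ek.
have D : decided (lstate P r' k.+2 i) <> None by rewrite dec_step // Ha.
by have := persist HE Hlt D; rewrite Hs E.
Qed.

Theorem mainTheorem1 (n t : nat) (g : context n) (P : protocol g) :
  t < n ->
  EBA_context g ->
  (forall fp, FM g fp -> SO t fp) ->
  implements_P0 P ->
  EBA_decision_protocol P /\
  (forall r, inR r -> forall i, i \in nonfaulty (rfp r) ->
     exists v k, k <= t.+2 /\ decides P r i v k) /\
  (forall r, inR r -> forall i v k, decides P r i v k ->
     exists j, init (lstate P r 0 j) = v).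
Proof.
move=> Htn HE HFM HI.
have Hval : forall r, inR r -> forall i v k, decides P r i v k ->
     exists j, init (lstate P r 0 j) = v.
  move=> r Hr i [] k [a [_ Ha]].
  - by exists i; exact: (valid1 HE HI Hr Ha).
  - exact: (valid0 HE HI Hr Ha).
split; last split=> //; last by move=> r Hr i _; exact: (term (P:=P) (i:=i) Htn HE HI HFM Hr).
move=> r Hr; split; [|split; [|split]].
- move=> i v k k' [a [-> Ha]] [b [-> Hb]]; rewrite ltnS => Hab.
  have D : decided (lstate P r a.+1 i) <> None by rewrite dec_step // Ha.
  by have := persist HE Hab D; rewrite (act_undec HI Hr Hb).
- move=> i j [] [] k k' Hi Hj [a [_ Ha]] [b [_ Hb]] //.
  + by case: (agree01 HE HI Hr (HFM _ (proj1 Hr)) Hj Hb Ha).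
  + by case: (agree01 HE HI Hr (HFM _ (proj1 Hr)) Hi Ha Hb).
- by move=> i v k _; apply: Hval.
- by move=> i _; case: (term (P:=P) (i:=i) Htn HE HI HFM Hr) => v [k [_ H]]; exists v, k.
Qed.
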